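(* For any recurrent set $F\subset A^*$ and any integer $d\ge1$, there are only finitely many finite $F$-maximal bifix codes $X\subset F$ of $F$-degree $d$.
   Context: $A$ is a finite alphabet. $F$ is recurrent if it is nonempty, closed under factors, and for all $u,w\in F$ there is $v\in F$ with $uvw\in F$. A bifix code is a set of nonempty words none of which is a proper prefix or proper suffix of another; $X\subset F$ is $F$-maximal bifix if not properly contained in a bifix code contained in $F$. A parse of $w$ with respect to $X$ is a triple $(v,x,u)$ with $w=vxu$, $v$ having no suffix in $X$, $x\in X^*$, $u$ having no prefix in $X$; $\delta_X(w)$ is their number and the $F$-degree is $d_F(X)=\max_{w\in F}\delta_X(w)$. *)

(* Defs.v *)
From mathcomp Require Import all_boot.
Set Implicit Arguments. Unset Strict Implicit. Unset Printing Implicit Defensive.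

Section Words.
Variable A : finType.
Implicit Types (F X Y : pred (seq A)) (u v w x : seq A).

Definition recurrent F : Prop :=
  [/\ exists w, F w,
      (forall u v w, F (u ++ v ++ w) -> F v) &
      (forall u w, F u -> F w -> exists2 v, F v & F (u ++ v ++ w))].

Definition bifix_code X : Prop :=
  [/\ ~~ X [::],
      (forall x y, X x -> X y -> prefix x y -> x = y) &
      (forall x y, X x -> X y -> suffix x y -> x = y)].

Definition subset_words X Y : Prop := forall w, X w -> Y w.

Definition F_maximal_bifix F X : Prop :=
  [/\ bifix_code X, subset_words X F &
      forall Y, bifix_code Y -> subset_words Y F -> subset_words X Y ->
        subset_words Y X].

Definition finite_words X : Prop := exists s : seq (seq A), X =i s.

(* membership in X^*, by recursion with fuel (fuel = size x suffices) *)
Fixpoint in_star_fuel X (n : nat) x : bool :=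
  match n with
  | 0 => x == [::]
  | n'.+1 => (x == [::]) ||
      has (fun k => X (take k.+1 x) && in_star_fuel X n' (drop k.+1 x))
          (iota 0 (size x))
  end.

Definition in_star X x : bool := in_star_fuel X (size x) x.

(* v has a suffix in X / u has a prefix in X (suffixes/prefixes include
   the empty word and the word itself) *)
Definition has_suffix_in X v : bool :=
  has (fun k => X (drop k v)) (iota 0 (size v).+1).
Definition has_prefix_in X u : bool :=
  has (fun k => X (take k u)) (iota 0 (size u).+1).

(* A parse (v,x,u) of w, with w = v x u, is determined by i = |v| and
   j = |v x|, 0 <= i <= j <= |w|. *)
Definition is_parse X w (i j : nat) : bool :=
  [&& i <= j, j <= size w,
      ~~ has_suffix_in X (take i w),
      in_star X (drop i (take j w)) &
      ~~ has_prefix_in X (drop j w)].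

Definition delta X w : nat :=
  \sum_(0 <= i < (size w).+1) \sum_(0 <= j < (size w).+1) is_parse X w i j.

Definition has_F_degree F X (d : nat) : Prop :=
  (exists2 w, F w & delta X w = d) /\ (forall w, F w -> delta X w <= d).

End Words.

(* Main.v *)
Require Import Defs.
From mathcomp Require Import all_boot.
From Stdlib Require Import Classical_Prop.
Set Implicit Arguments. Unset Strict Implicit. Unset Printing Implicit Defensive.
Fixpoint pw (T : Type) (l : seq T) : seq (seq T) :=
  match l with
  | [::] => [:: [::]]
  | a :: l' => pw l' ++ map (cons a) (pw l')
  end.

Lemma filter_pw (T : eqType) (P : pred T) (l : seq T) : filter P l \in pw l.
Proof.
elim: l => [|a l IH] /=; first by rewrite inE.
by rewrite mem_cat; case: (P a); [rewrite (map_f (cons a)) ?orbT | rewrite IH].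
Qed.

Fixpoint wl (A : finType) (m : nat) : seq (seq A) :=
  match m with
  | 0 => [:: [::]]
  | m'.+1 => flatten [seq [seq a :: w | w <- wl A m'] | a <- enum A]
  end.

Lemma wl_mem (A : finType) (w : seq A) : w \in wl A (size w).
Proof.
elim: w => [|a w IH] /=; first by rewrite inE.
apply/flattenP; exists [seq a :: w0 | w0 <- wl A (size w)]; last exact: map_f.
by apply: map_f; rewrite mem_enum.
Qed.

Definition allw (A : finType) (N : nat) : seq (seq A) :=
  flatten [seq wl A m | m <- iota 0 N.+1].

Lemma allw_mem (A : finType) N (w : seq A) : size w <= N -> w \in allw A N.
Proof.
move=> H; apply/flattenP; exists (wl A (size w)); last exact: wl_mem.
by apply: map_f; rewrite mem_iota add0n ltnS.
Qed.

Lemma bound_list (T : eqType) (Bd : T -> nat -> Prop) (l : seq T) :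
  (forall t b b', b <= b' -> Bd t b -> Bd t b') ->
  exists B, forall t, t \in l -> (exists b, Bd t b) -> Bd t B.
Proof.
move=> mono; elim: l => [|a l [B IH]]; first by exists 0.
case: (Classical_Prop.classic (exists b, Bd a b)) => [[b Hb]|Hn].
  exists (maxn b B) => t; rewrite inE => /orP [/eqP -> _|Ht Hex].
    by apply: mono Hb; rewrite leq_maxl.
  by apply: mono (IH t Ht Hex); rewrite leq_maxr.
exists B => t; rewrite inE => /orP [/eqP -> Hex|Ht Hex]; first by case: (Hn Hex).
exact: IH.
Qed.

Lemma first_pos (P : pred nat) L y : L <= y -> P y ->
  exists r, [/\ L <= r <= y, P r & forall s, L <= s < r -> ~~ P s].
Proof.
move=> Hy Py; have exQ : exists m, (L <= m) && P m by exists y; rewrite Hy.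
case: (find_ex_minn exQ) => m /andP [H1 H2] Hmin.
exists m; split => //; first by rewrite H1 Hmin // Hy.
move=> s /andP [Hs1 Hs2]; apply/negP => Ps.
by move: (Hmin s); rewrite Hs1 Ps leqNgt Hs2 => /(_ isT).
Qed.

Lemma last_pos (P : pred nat) x0 N : x0 <= N -> P x0 ->
  exists r, [/\ x0 <= r <= N, P r & forall s, r < s <= N -> ~~ P s].
Proof.
elim: N => [|N IH] Hx Px.
  exists x0; split => //; first by rewrite leqnn.
  by move=> s /andP [H1 H2]; move: Hx; rewrite leqn0 => /eqP E; move: H1; rewrite E ltnNge H2.
case: (boolP (P N.+1)) => HN.
  exists N.+1; split => //; first by rewrite Hx leqnn.
  by move=> s /andP [H1 H2]; move: H2; rewrite leqNgt H1.
case: (leqP x0 N) => Hx2; last first.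
  have E : x0 = N.+1 by apply/eqP; rewrite eqn_leq Hx Hx2.
  by move: HN; rewrite -E Px.
have [r [/andP [Hr1 Hr2] Pr Hmax]] := IH Hx2 Px.
exists r; split => //; first by rewrite Hr1 (leq_trans Hr2).
move=> s /andP [H1 H2]; case: (ltngtP s N.+1) => Hs.
- by apply: Hmax; rewrite H1 -ltnS.
- by move: H2; rewrite leqNgt Hs.
- by rewrite Hs.
Qed.

Lemma catIl (T : eqType) (y s s' : seq T) : y ++ s = y ++ s' -> s = s'.
Proof. by elim: y => //= a y IH [] /IH. Qed.

Lemma catIr (T : eqType) (y s s' : seq T) : s ++ y = s' ++ y -> s = s'.
Proof.
move=> E; have: rev y ++ rev s = rev y ++ rev s' by rewrite -!rev_cat E.
by move/catIl/(congr1 rev); rewrite !revK.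
Qed.

Lemma cat_ne (T : Type) (y s : seq T) : y <> [::] -> y ++ s <> [::].
Proof. by case: y. Qed.

Lemma cat_ner (T : Type) (y s : seq T) : y <> [::] -> s ++ y <> [::].
Proof. by case: s => //; case: y. Qed.

Section Basic.
Variable A : finType.
Variable X : pred (seq A).
Hypothesis hX0 : ~~ X [::].
Hypothesis hpre : forall x y, X x -> X y -> prefix x y -> x = y.
Hypothesis hsuf : forall x y, X x -> X y -> suffix x y -> x = y.

Inductive Star : seq A -> Prop :=
| Star0 : Star [::]
| StarC y w : X y -> Star w -> Star (y ++ w).

Lemma Xne y : X y -> y <> [::].
Proof. by move=> Hy E; move: hX0; rewrite -E Hy. Qed.

Lemma Star_cat a b : Star a -> Star b -> Star (a ++ b).
Proof. by elim=> // y w Hy _ IH Hb; rewrite -catA; constructor; auto. Qed.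

Lemma StarX y : X y -> Star y.
Proof. by move=> Hy; rewrite -(cats0 y); constructor => //; constructor. Qed.

Lemma Star_inv w : Star w -> w <> [::] -> exists y w', [/\ w = y ++ w', X y & Star w'].
Proof. by case=> [//|y w' Hy Hw _]; exists y, w'. Qed.

Lemma Star_invr w : Star w -> w <> [::] ->
  exists w' y, [/\ w = w' ++ y, X y & Star w'].
Proof.
elim=> [//|y w0 Hy Hw IH _].
case: (w0 =P [::]) => [->|/IH [w' [y' [-> Hy' Hw']]]].
  by exists [::], y; rewrite cats0; split => //; constructor.
exists (y ++ w'), y'; rewrite catA; split => //; exact: StarC.
Qed.

Lemma cat_cmp (y y' s s' : seq A) : y ++ s = y' ++ s' -> prefix y y' \/ prefix y' y.
Proof.
elim: y y' => [|a y IH] [|b y'] //=; try by [left|right].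
case=> -> /IH [H|H]; [left|right]; by rewrite /= eqxx.
Qed.

Lemma cat_cmpr (y y' s s' : seq A) : s ++ y = s' ++ y' -> suffix y y' \/ suffix y' y.
Proof.
move=> E; have : rev y ++ rev s = rev y' ++ rev s' by rewrite -!rev_cat E.
by move/cat_cmp.
Qed.

Lemma prefix_eq (y y' s s' : seq A) : X y -> X y' -> y ++ s = y' ++ s' -> y = y' /\ s = s'.
Proof.
move=> Hy Hy' E.
have Eyy : y = y' by case: (cat_cmp E) => H; [apply: hpre|apply/esym/hpre].
by split => //; move: E; rewrite Eyy => /catIl.
Qed.

Lemma suffix_eq (y y' s s' : seq A) : X y -> X y' -> s ++ y = s' ++ y' -> y = y' /\ s = s'.
Proof.
move=> Hy Hy' E.
have Eyy : y = y' by case: (cat_cmpr E) => H; [apply: hsuf|apply/esym/hsuf].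
by split => //; move: E; rewrite Eyy => /catIr.
Qed.

Lemma Star_cancl a b : Star a -> Star (a ++ b) -> Star b.
Proof.
elim=> // y w Hy _ IH; rewrite -catA => H.
have [|y' [w' [E Hy' Hw']]] := Star_inv H; first exact/cat_ne/Xne.
by have [_ E2] := prefix_eq Hy Hy' E; apply: IH; rewrite E2.
Qed.

Lemma Star_cancr a b : Star b -> Star (a ++ b) -> Star a.
Proof.
move=> Hb; have [n Hn] : exists n, size b <= n by exists (size b).
elim: n b Hn Hb => [|n IH] b Hn Hb Hab.
  by move: Hn; rewrite leqn0 size_eq0 => /eqP Eb; rewrite Eb cats0 in Hab.
case: (b =P [::]) => [Eb|bne]; first by rewrite Eb cats0 in Hab.
have [b' [y [Eb Hy Hb']]] := Star_invr Hb bne.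
rewrite Eb catA in Hab.
have [|w'' [y'' [E Hy'' Hw'']]] := Star_invr Hab; first exact/cat_ner/Xne.
have [_ E2] := suffix_eq Hy Hy'' E.
apply: (IH b') => //; last by rewrite E2.
move: Hn (Xne Hy); rewrite Eb size_cat; case: y {Hy E Eb Hab} => // c y H _.
move: H; rewrite /= addnS ltnS; apply: leq_trans; exact: leq_addr.
Qed.

Lemma in_star_fuelP n x : size x <= n -> in_star_fuel X n x <-> Star x.
Proof.
elim: n x => [|n IH] x Hn /=.
  by move: Hn; rewrite leqn0 size_eq0 => /eqP ->; split => // _; constructor.
split.
  case/orP => [/eqP -> | /hasP [k]]; first by constructor.
  rewrite mem_iota add0n => /andP [_ Hk] /andP [Hx Hd].
  rewrite -(cat_take_drop k.+1 x); constructor => //.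
  apply/IH => //; rewrite size_drop leq_subLR; move: Hn; rewrite -addn1.
  by move/leq_trans; apply; rewrite addnC leq_add2r.
case: (x =P [::]) => [-> //|xne Hx]; apply/orP; right.
have [y [w [Exyw Hy Hw]]] := Star_inv Hx xne.
apply/hasP; exists (size y).-1.
  rewrite mem_iota add0n Exyw size_cat /=; move: (Xne Hy); case: y {Hy Exyw} => //= c y _.
  by rewrite ltnS leq_addr.
have Hsy : (size y).-1.+1 = size y by move: (Xne Hy); case: y {Hy Exyw}.
rewrite Hsy Exyw take_size_cat // drop_size_cat // Hy /=.
apply/IH => //; move: Hn; rewrite Exyw size_cat -Hsy addSn ltnS.
by apply: leq_trans; rewrite leq_addl.
Qed.

Lemma in_starP x : in_star X x <-> Star x.
Proof. exact: in_star_fuelP. Qed.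

Lemma hsP v : reflect (exists v1 v2, v = v1 ++ v2 /\ X v2) (has_suffix_in X v).
Proof.
apply: (iffP hasP) => [[k _ Hk]|[v1 [v2 [-> Hv2]]]].
  by exists (take k v), (drop k v); rewrite cat_take_drop.
exists (size v1); last by rewrite drop_size_cat.
by rewrite mem_iota add0n size_cat ltnS leq_addr.
Qed.

Lemma hpP u : reflect (exists u1 u2, u = u1 ++ u2 /\ X u1) (has_prefix_in X u).
Proof.
apply: (iffP hasP) => [[k _ Hk]|[u1 [u2 [-> Hu1]]]].
  by exists (take k u), (drop k u); rewrite cat_take_drop.
exists (size u1); last by rewrite take_size_cat.
by rewrite mem_iota add0n size_cat ltnS leq_addr.
Qed.

Lemma greedyL s : exists t u, [/\ s = t ++ u, Star t & ~~ has_prefix_in X u].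
Proof.
have [n Hn] : exists n, size s <= n by exists (size s).
elim: n s Hn => [|n IH] s Hn.
  move: Hn; rewrite leqn0 size_eq0 => /eqP ->; exists [::], [::]; split => //; first by constructor.
  by apply/hpP => -[[|c u1] [u2 [E Hu1]]]; [exact: (Xne Hu1) | done].
case: (boolP (has_prefix_in X s)) => [/hpP [y [s' [Es Hy]]]|H]; last first.
  by exists [::], s; split => //; constructor.
have [|t [u [Es' Ht Hu]]] := IH s'.
  move: Hn; rewrite Es size_cat; move: (Xne Hy); case: y {Hy Es} => // c y _ /=.
  by rewrite addSn ltnS; apply: leq_trans; rewrite leq_addl.
by exists (y ++ t), u; rewrite Es Es' catA; split => //; constructor.
Qed.

Lemma greedyR s : exists u t, [/\ s = u ++ t, Star t & ~~ has_suffix_in X u].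
Proof.
have [n Hn] : exists n, size s <= n by exists (size s).
elim: n s Hn => [|n IH] s Hn.
  move: Hn; rewrite leqn0 size_eq0 => /eqP ->; exists [::], [::]; split => //; first by constructor.
  by apply/hsP => -[u1 [[|c u2] [E Hu2]]]; [exact: (Xne Hu2) | case: u1 E].
case: (boolP (has_suffix_in X s)) => [/hsP [s' [y [Es Hy]]]|H]; last first.
  by exists s, [::]; rewrite cats0; split => //; constructor.
have [|u [t [Es' Ht Hu]]] := IH s'.
  move: Hn; rewrite Es size_cat; move: (Xne Hy); case: y {Hy Es} => // c y _ /=.
  by rewrite addnS ltnS; apply: leq_trans; rewrite leq_addr.
exists u, (t ++ y); rewrite Es Es' catA; split => //.
by apply: Star_cat => //; apply: StarX.
Qed.

Lemma greedyL_uniq t u t' u' : t ++ u = t' ++ u' -> Star t -> Star t' ->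
  ~~ has_prefix_in X u -> ~~ has_prefix_in X u' -> t = t'.
Proof.
wlog le : t u t' u' / size t <= size t'.
  move=> W E Ht Ht' Hu Hu'; case: (leqP (size t) (size t')) => H; first exact: (W t u t' u').
  by apply/esym/(W t' u' t u) => //; apply: ltnW.
move=> E Ht Ht' Hu Hu'.
have [m Et'] : exists m, t' = t ++ m.
  case: (cat_cmp E) => /prefixP [m Em]; first by exists m.
  move: le; rewrite Em size_cat -{2}(addn0 (size t')) leq_add2l leqn0 size_eq0 => /eqP Em0.
  by exists [::]; rewrite Em0 !cats0.
have Hm : Star m by apply: Star_cancl Ht _; rewrite -Et'.
case: (m =P [::]) => [Em|mne]; first by rewrite Et' Em cats0.
have [y [w [Emw Hy _]]] := Star_inv Hm mne.
move: E; rewrite Et' -catA => /catIl Eu; case/negP: Hu; apply/hpP.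
by exists y, (w ++ u'); rewrite Eu Emw catA.
Qed.

Lemma greedyR_uniq t u t' u' : u ++ t = u' ++ t' -> Star t -> Star t' ->
  ~~ has_suffix_in X u -> ~~ has_suffix_in X u' -> t = t'.
Proof.
wlog le : t u t' u' / size t <= size t'.
  move=> W E Ht Ht' Hu Hu'; case: (leqP (size t) (size t')) => H; first exact: (W t u t' u').
  by apply/esym/(W t' u' t u) => //; apply: ltnW.
move=> E Ht Ht' Hu Hu'.
have [m Et'] : exists m, t' = m ++ t.
  case: (cat_cmpr E) => /suffixP [m Em]; first by exists m.
  move: le; rewrite Em size_cat -{2}(add0n (size t')) leq_add2r leqn0 size_eq0 => /eqP Em0.
  by exists [::]; rewrite Em0.
have Hm : Star m by apply: Star_cancr Ht _; rewrite -Et'.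
case: (m =P [::]) => [Em|mne]; first by rewrite Et' Em.
have [w [y [Emw Hy _]]] := Star_invr Hm mne.
move: E; rewrite Et' catA => /catIr Eu; case/negP: Hu; apply/hsP.
by exists (u' ++ w), y; rewrite Eu Emw catA.
Qed.

Definition pre (W : seq A) i := ~~ has_suffix_in X (take i W).
Definition post (W : seq A) j := ~~ has_prefix_in X (drop j W).
Definition seg (W : seq A) i j := drop i (take j W).

Lemma seg_eq (W : seq A) i j : i <= j -> seg W i j = take (j - i) (drop i W).
Proof. by move=> le; rewrite /seg take_drop subnK. Qed.

Lemma drop_seg (W : seq A) i j : i <= j -> drop i W = seg W i j ++ drop j W.
Proof.
move=> le; rewrite seg_eq // -{1}(cat_take_drop (j - i) (drop i W)) drop_drop subnK //.
Qed.

Lemma take_seg (W : seq A) i j : i <= j -> take j W = take i W ++ seg W i j.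
Proof. by move=> le; rewrite /seg -{1}(cat_take_drop i (take j W)) take_takel. Qed.

Lemma sum_count (P : pred nat) r : \sum_(i <- r) P i = count P r.
Proof. by elim: r => [|a r IH]; rewrite ?big_nil ?big_cons ?IH. Qed.

Lemma parse_j (W : seq A) i : i <= size W -> pre W i ->
  exists j0, j0 <= size W /\ forall j, is_parse X W i j = (j == j0).
Proof.
move=> Hi Hpre; rewrite /pre in Hpre; have [t [u [E Ht Hu]]] := greedyL (drop i W).
have Hst : size t <= size W - i by rewrite -size_drop E size_cat leq_addr.
have Hj0 : i + size t <= size W by rewrite -leq_subRL.
exists (i + size t); split => // j.
apply/idP/idP => [|/eqP ->]; last first.
  rewrite /is_parse leq_addr Hj0 Hpre /=.
  have -> : drop i (take (i + size t) W) = t.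
    by rewrite -/(seg W i _) seg_eq ?leq_addr // addnC addnK E take_size_cat.
  rewrite addnC -drop_drop E drop_size_cat //; apply/andP; split => //; exact/in_starP.
case/and5P => Hij HjW _ /in_starP Hs Hu'.
have E2 : drop i W = seg W i j ++ drop j W by exact: drop_seg.
have Et := greedyL_uniq (etrans (esym E) E2) Ht Hs Hu Hu'.
by rewrite Et /seg size_drop size_takel // subnKC.
Qed.

Lemma parse_i (W : seq A) j : j <= size W -> post W j ->
  exists i0, i0 <= size W /\ forall i, is_parse X W i j = (i == i0).
Proof.
move=> Hj Hpost; rewrite /post in Hpost; have [u [t [E Ht Hu]]] := greedyR (take j W).
have Hsu : size u <= j by rewrite -(size_takel Hj) E size_cat leq_addr.
exists (size u); split; first exact: leq_trans Hj.
move=> i; apply/idP/idP => [|/eqP ->]; last first.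
  rewrite /is_parse Hsu Hj Hpost /= andbT.
  have -> : take (size u) W = u by rewrite -(take_takel _ Hsu) E take_size_cat.
  rewrite Hu /=; apply/in_starP; by rewrite E drop_size_cat.
case/and5P => Hij HjW Hpre /in_starP Hs _.
have E2 : take j W = take i W ++ seg W i j by exact: take_seg.
have Et := greedyR_uniq (etrans (esym E) E2) Ht Hs Hu Hpre.
move: E2; rewrite E Et => /catIr ->; rewrite size_takel //; exact: leq_trans HjW.
Qed.

Lemma delta_pre (W : seq A) : delta X W = count (pre W) (iota 0 (size W).+1).
Proof.
rewrite /delta /index_iota subn0 -sum_count; apply: eq_big_seq => i.
rewrite mem_iota add0n ltnS => Hi.
case: (boolP (pre W i)) => Hp.
  have [j0 [Hj0 E]] := parse_j Hi Hp.
  rewrite (eq_bigr (fun j => nat_of_bool (j == j0))); last by move=> j _; rewrite E.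
  rewrite sum_count; have -> : count (fun j => j == j0) (iota 0 (size W).+1) = count_mem j0 (iota 0 (size W).+1) by [].
  by rewrite count_uniq_mem ?iota_uniq // mem_iota add0n ltnS Hj0.
rewrite big1_seq // => j _.
by apply/eqP; rewrite eqb0; apply/negP => /and5P [_ _ H _ _]; move: Hp; rewrite /pre H.
Qed.

Lemma delta_post (W : seq A) : delta X W = count (post W) (iota 0 (size W).+1).
Proof.
rewrite /delta exchange_big /index_iota subn0 -sum_count; apply: eq_big_seq => j.
rewrite mem_iota add0n ltnS => Hj.
case: (boolP (post W j)) => Hp.
  have [i0 [Hi0 E]] := parse_i Hj Hp.
  rewrite (eq_bigr (fun i => nat_of_bool (i == i0))); last by move=> i _; rewrite E.
  rewrite sum_count; have -> : count (fun i => i == i0) (iota 0 (size W).+1) = count_mem i0 (iota 0 (size W).+1) by [].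
  by rewrite count_uniq_mem ?iota_uniq // mem_iota add0n ltnS Hi0.
rewrite big1_seq // => i _.
by apply/eqP; rewrite eqb0; apply/negP => /and5P [_ _ _ _ H]; move: Hp; rewrite /post H.
Qed.

Lemma drop_catl (T : Type) n (s1 s2 : seq T) : n <= size s1 -> drop n (s1 ++ s2) = drop n s1 ++ s2.
Proof.
move=> H; rewrite drop_cat; case: ltnP => H2 //.
have E : n = size s1 by apply/eqP; rewrite eqn_leq H H2.
by rewrite E subnn drop0 drop_size.
Qed.

Lemma seg_cat (W : seq A) o r r' : o <= r -> r <= r' -> r' <= size W ->
  seg W o r' = seg W o r ++ seg W r r'.
Proof.
move=> H1 H2 H3; rewrite {1}/seg (take_seg W H2) drop_catl //.
by rewrite size_takel // (leq_trans H2 H3).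
Qed.

Definition isorig (W : seq A) o r := [&& o <= r, pre W o & in_star X (seg W o r)].
Definition orig (W : seq A) r := find (fun o => isorig W o r) (iota 0 r.+1).

Lemma orig_ex (W : seq A) r : r <= size W -> exists o, isorig W o r.
Proof.
move=> Hr; have [u [t [E Ht Hu]]] := greedyR (take r W).
have Hsu : size u <= r by rewrite -(size_takel Hr) E size_cat leq_addr.
exists (size u); rewrite /isorig Hsu /pre.
have -> : take (size u) W = u by rewrite -(take_takel _ Hsu) E take_size_cat.
by rewrite Hu /seg E drop_size_cat //=; apply/in_starP.
Qed.

Lemma orig_uniq (W : seq A) r o1 o2 : r <= size W -> isorig W o1 r -> isorig W o2 r -> o1 = o2.
Proof.
move=> Hr /and3P [H1 P1 /in_starP S1] /and3P [H2 P2 /in_starP S2].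
have E1 := take_seg W H1; have E2 := take_seg W H2.
have Es := greedyR_uniq (etrans (esym E1) E2) S1 S2 P1 P2.
move: (etrans (esym E1) E2); rewrite Es => /catIr /(congr1 size).
by rewrite !size_takel // ?(leq_trans H1) ?(leq_trans H2).
Qed.

Lemma orig_spec (W : seq A) r : r <= size W -> isorig W (orig W r) r.
Proof.
move=> Hr; have [o Ho] := orig_ex Hr.
have Hin : has (fun o => isorig W o r) (iota 0 r.+1).
  by apply/hasP; exists o => //; rewrite mem_iota add0n ltnS; case/andP: Ho.
have Hf : find (fun o => isorig W o r) (iota 0 r.+1) < r.+1.
  by rewrite -{2}(size_iota 0 r.+1) -has_find.
by have := nth_find 0 Hin; rewrite nth_iota // add0n.
Qed.

Lemma orig_eq (W : seq A) r o : r <= size W -> isorig W o r -> orig W r = o.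
Proof. by move=> Hr Ho; apply: orig_uniq Hr (orig_spec Hr) Ho. Qed.

Lemma orig_le (W : seq A) r : r <= size W -> orig W r <= r.
Proof. by move=> Hr; case/and3P: (orig_spec Hr). Qed.

Lemma orig_pre (W : seq A) r : r <= size W -> pre W (orig W r).
Proof. by move=> Hr; case/and3P: (orig_spec Hr). Qed.

Lemma orig_self (W : seq A) o : o <= size W -> pre W o -> orig W o = o.
Proof.
move=> Ho Hp; apply: orig_eq => //; rewrite /isorig leqnn Hp /seg drop_oversize.
  by apply/in_starP; constructor.
by rewrite size_takel.
Qed.

Lemma orig_step (W : seq A) r r' : r <= r' -> r' <= size W -> Star (seg W r r') ->
  orig W r' = orig W r.
Proof.
move=> H1 H2 Hs; have Hr := leq_trans H1 H2.
case/and3P: (orig_spec Hr) => Ho Hp /in_starP Hso.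
apply: orig_eq => //; rewrite /isorig (leq_trans Ho H1) Hp /=; apply/in_starP.
by rewrite (seg_cat Ho H1 H2); apply: Star_cat.
Qed.

Lemma orig_back (W : seq A) r r' : r <= r' -> r' <= size W -> orig W r = orig W r' ->
  Star (seg W r r').
Proof.
move=> H1 H2 E; have Hr := leq_trans H1 H2.
case/and3P: (orig_spec Hr) => Ho _ /in_starP Hso.
case/and3P: (orig_spec H2); rewrite -E => Ho' _ /in_starP Hso'.
by apply: (Star_cancl Hso); rewrite -seg_cat.
Qed.

Lemma size_seg (W : seq A) r r' : r <= r' -> r' <= size W -> size (seg W r r') = r' - r.
Proof. by move=> H1 H2; rewrite /seg size_drop size_takel. Qed.

Lemma orig_consec (W : seq A) r r' : r < r' -> r' <= size W -> orig W r = orig W r' ->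
  (forall s, r < s < r' -> orig W s != orig W r) -> X (seg W r r').
Proof.
move=> H1 H2 E Hb.
have Hs := orig_back (ltnW H1) H2 E.
have sne : seg W r r' <> [::].
  by move/(congr1 size); rewrite size_seg ?(ltnW H1) //; apply/eqP; rewrite subn_eq0 -ltnNge.
have [y [w [Ey Hy Hw]]] := Star_inv Hs sne.
have Hsy : r + size y <= r'.
  by rewrite -leq_subRL ?(ltnW H1) // -(size_seg (ltnW H1) H2) Ey size_cat leq_addr.
have Ey2 : seg W r (r + size y) = y.
  rewrite seg_eq ?leq_addr // addKn; rewrite seg_eq ?(ltnW H1) // in Ey.
  have Hs2 : size y <= r' - r by rewrite leq_subRL // ltnW.
  by rewrite -(take_takel _ Hs2) Ey take_size_cat.
have Eo : orig W (r + size y) = orig W r.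
  by apply: orig_step; [rewrite leq_addr | exact: leq_trans H2 | rewrite Ey2; apply: StarX].
case: (ltngtP (r + size y) r') => Hc.
- have Hpos : r < r + size y.
    by move: (Xne Hy); case: (y) => // c y' _; rewrite addnS ltnS leq_addr.
  by move: (Hb (r + size y)); rewrite Hpos Hc Eo eqxx => /(_ isT).
- by move: Hc; rewrite ltnNge Hsy.
- by rewrite -Hc Ey2.
Qed.

Lemma orig_last (W : seq A) r : r <= size W ->
  (forall s, r < s <= size W -> orig W s != orig W r) -> post W r.
Proof.
move=> Hr Hb; apply/hpP => -[y [w [E Hy]]].
have Hsy : r + size y <= size W by rewrite -leq_subRL // -size_drop E size_cat leq_addr.
have Ey2 : seg W r (r + size y) = y.
  by rewrite seg_eq ?leq_addr // addKn E take_size_cat.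
have Eo : orig W (r + size y) = orig W r.
  by apply: orig_step; [rewrite leq_addr | exact: Hsy | rewrite Ey2; apply: StarX].
move: (Xne Hy); case: y {E Ey2} Hy Hsy Eo => [//|c y] _ Hsy Eo _.
by move: (Hb (r + size (c :: y))); rewrite Hsy Eo eqxx /= addnS ltnS leq_addr => /(_ isT).
Qed.
Definition kcover (Y : pred (seq A)) (k : nat) (u : seq A) : Prop :=
  exists g : nat -> nat,
    (forall r, 0 < r < size u -> g r < k) /\
    (forall r r', r < r' -> r' <= size u -> g r = g r' -> g r < k ->
       (forall s, r < s < r' -> g s != g r) -> Y (seg u r r')).

Lemma seg_mid (P u Q : seq A) r r' : r <= r' -> r' <= size u ->
  seg (P ++ u ++ Q) (size P + r) (size P + r') = seg u r r'.
Proof.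
move=> H1 H2; rewrite /seg take_cat ltnNge leq_addr /= addKn takel_cat //.
by rewrite drop_cat ltnNge leq_addr /= addKn.
Qed.

Lemma count0P (T : eqType) (P : pred T) s : count P s = 0 -> forall x, x \in s -> ~~ P x.
Proof.
move=> H x Hx; apply/negP => Px.
have : 0 < count P s by rewrite -has_count; apply/hasP; exists x.
by rewrite H.
Qed.

Section Frame.
Variable F : pred (seq A).
Variable d : nat.
Hypothesis recF : recurrent F.
Hypothesis degle : forall w, F w -> delta X w <= d.
Variable z : seq A.
Hypothesis Fz : F z.
Hypothesis dz : delta X z = d.
Variable n : nat.
Hypothesis Xn : forall x, X x -> size x <= n.

Lemma frame (Y : pred (seq A)) k u : (forall w, Y w -> X w) -> k < d -> F u ->
  kcover Y k u -> size u <= n.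
Proof.
move=> YX kd Fu [g [Hg1 Hg2]].
case: recF => _ _ Hrec.
have [t _ Ft] := Hrec _ _ Fz Fu.
have [t' _ Ft'] := Hrec _ _ Ft Fz.
set P := z ++ t; set Q := t' ++ z.
set W := (z ++ t ++ u) ++ t' ++ z in Ft'.
have EW : W = P ++ u ++ Q by rewrite /W /P /Q !catA.
have EW1 : W = z ++ (t ++ u ++ t' ++ z) by rewrite /W !catA.
set R := z ++ t ++ u ++ t'.
have EW2 : W = R ++ z by rewrite /W /R !catA.
set a := size P.
have szW : size W = a + size u + size Q by rewrite EW size_cat size_cat addnA.
have dW := degle Ft'.
have Hcz : count (pre W) (iota 0 (size z).+1) = d.
  rewrite -dz delta_pre; apply: eq_in_count => i; rewrite mem_iota add0n ltnS => Hi.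
  by rewrite /pre EW1 takel_cat.
have szWz : size z <= size W by rewrite EW1 size_cat leq_addr.
have nopre : forall i, size z < i <= size W -> ~~ pre W i.
  move=> i /andP [H1 H2].
  have : count (pre W) (iota 0 (size W).+1) <= d by rewrite -delta_pre.
  have -> : (size W).+1 = (size z).+1 + (size W - size z) by rewrite addSn subnKC.
  rewrite iotaD count_cat Hcz add0n -{2}(addn0 d) leq_add2l leqn0 => /eqP/count0P.
  by apply; rewrite mem_iota H1 addSn subnKC // ltnS.
have szR : size W = size R + size z by rewrite EW2 size_cat.
have Hcz' : count (post W) (iota (size R) (size z).+1) = d.
  rewrite -dz delta_post -{1}(addn0 (size R)) iotaDl count_map; apply: eq_count => j /=.
  by rewrite /post EW2 drop_cat ltnNge leq_addr /= addKn.
have nopost : forall j, j < size R -> ~~ post W j.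
  move=> j Hj.
  have : count (post W) (iota 0 (size W).+1) <= d by rewrite -delta_post.
  rewrite szR -addnS iotaD count_cat add0n Hcz' -{2}(add0n d) leq_add2r leqn0.
  by move=> /eqP/count0P; apply; rewrite mem_iota.
have segW : forall r r', r <= r' -> r' <= size u -> seg W (a + r) (a + r') = seg u r r'.
  by move=> r r' H1 H2; rewrite EW seg_mid.
have szaW : forall r, r <= size u -> a + r <= size W.
  by move=> r Hr; rewrite szW -addnA leq_add2l (leq_trans Hr) ?leq_addr.
have same : forall m r r', r' - r <= m -> r <= r' -> r' <= size u -> g r = g r' -> g r < k ->
    orig W (a + r) = orig W (a + r').
  elim=> [|m IH] r r' Hm H1 H2 E Hk.
    by have -> : r' = r by apply/eqP; rewrite eqn_leq H1 andbT -subn_eq0 -leqn0.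
  case: (ltngtP r r') => Hrr; last by rewrite Hrr.
    2: by move: H1; rewrite leqNgt Hrr.
  have [s [/andP [Hs1 Hs2] Ps Hmin]] := first_pos (P := fun s => g s == g r) Hrr (introT eqP (esym E)).
  have Ecs : g r = g s by apply/esym/eqP.
  have Hcons : forall s', r < s' < s -> g s' != g r.
    by move=> s' /andP [Hs1' Hs2']; apply: Hmin; rewrite Hs1' Hs2'.
  have Hy := Hg2 r s Hs1 (leq_trans Hs2 H2) Ecs Hk Hcons.
  have Eo : orig W (a + s) = orig W (a + r).
    apply: orig_step; [by rewrite leq_add2l ltnW | exact: szaW (leq_trans Hs2 H2) |].
    by rewrite segW ?(ltnW Hs1) ?(leq_trans Hs2 H2) //; apply/StarX/YX.
  have Hm' : r' - s <= m by rewrite -ltnS; apply: leq_trans Hm; rewrite ltn_sub2l.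
  have Egs : g s = g r' by rewrite -Ecs.
  have Hks : g s < k by rewrite -Ecs.
  by rewrite -Eo; exact: IH s r' Hm' Hs2 H2 Egs Hks.
set h := fun l => orig W (a + find (fun s => g s == l) (iota 0 (size u).+1)).
have inter : forall r, 0 < r < size u -> orig W (a + r) = h (g r).
  move=> r Hr; rewrite /h; set s0 := find (fun s => g s == g r) (iota 0 (size u).+1).
  have Hhas : has (fun s => g s == g r) (iota 0 (size u).+1).
    by apply/hasP; exists r; rewrite ?eqxx // mem_iota add0n ltnS; case/andP: Hr => _ /ltnW.
  have Hs0 : s0 < (size u).+1 by rewrite -{1}(size_iota 0 (size u).+1) -has_find.
  have Eg : g s0 = g r by have := nth_find 0 Hhas; rewrite nth_iota // add0n => /eqP.
  have Hk := Hg1 r Hr.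
  have Hru : r <= size u by case/andP: Hr => _ /ltnW.
  have Hs0u : s0 <= size u by rewrite -ltnS.
  case: (leqP s0 r) => Hsr.
    apply/esym; apply: (same (size u)) => //; [exact: leq_trans (leq_subr _ _) Hru | by rewrite Eg].
  apply: (same (size u)) => //; [exact: leq_trans (leq_subr _ _) Hs0u | exact: ltnW].
set OW := filter (pre W) (iota 0 (size W).+1).
have szOW : d <= size OW.
  rewrite size_filter; have -> : (size W).+1 = (size z).+1 + (size W - size z) by rewrite addSn subnKC.
  by rewrite iotaD count_cat Hcz leq_addr.
case: (boolP (all (fun o => o \in map h (iota 0 k)) OW)) => Hall.
  have : size OW <= size (map h (iota 0 k)).
    by apply: uniq_leq_size; [apply/filter_uniq/iota_uniq | apply/allP].
  by rewrite size_map size_iota => /(leq_trans szOW); rewrite leqNgt kd.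
case/allPn: Hall => o; rewrite mem_filter mem_iota add0n ltnS => /andP [Po HoW] Ho.
have Hoz : o <= size z by rewrite leqNgt; apply/negP => H; move: (nopre o); rewrite H HoW Po => /(_ isT).
have Hoa : o <= a by rewrite /a /P size_cat (leq_trans Hoz) ?leq_addr.
have notin : forall r, 0 < r < size u -> orig W (a + r) != o.
  move=> r Hr; rewrite inter //; apply/eqP => E; move: Ho; rewrite -E map_f //.
  by rewrite mem_iota add0n Hg1.
have Oo : orig W o = o by apply: orig_self.
have [r1 [/andP [Hr1a Hr1b] Pr1 Hr1m]] := last_pos (P := fun r => orig W r == o) Hoa (introT eqP Oo).
have [rm [/andP [Hrma Hrmb] Prm Hrmm]] := last_pos (P := fun r => orig W r == o) HoW (introT eqP Oo).
have Hpost : post W rm.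
  apply: orig_last => // s Hs; rewrite (eqP Prm); exact: Hrmm.
have Hrm : size R <= rm by rewrite leqNgt; apply/negP => /nopost; rewrite Hpost.
have HRau : a + size u <= size R by rewrite /R /a /P !size_cat !addnA leq_addr.
have [r2 [/andP [Hr2a Hr2b] Pr2 Hr2m]] := first_pos (P := fun r => orig W r == o) (leq_trans HRau Hrm) Prm.
case: (posnP (size u)) => [-> //|upos].
have Hr12 : r1 < r2 by apply: (leq_ltn_trans Hr1b); apply: leq_trans Hr2a; rewrite -addn1 leq_add2l.
have Hr2W : r2 <= size W := leq_trans Hr2b Hrmb.
have Hx : X (seg W r1 r2).
  apply: orig_consec => //; first by rewrite (eqP Pr1) (eqP Pr2).
  move=> s /andP [Hs1 Hs2]; rewrite (eqP Pr1).
  case: (leqP s a) => Hsa; first by apply: Hr1m; rewrite Hs1 Hsa.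
  case: (ltnP s (a + size u)) => Hsu.
    have -> : s = a + (s - a) by rewrite subnKC // ltnW.
    apply: notin; rewrite subn_gt0 Hsa /= ltn_subLR ?Hsu //; exact: ltnW.
  by apply: Hr2m; rewrite Hsu Hs2.
have := Xn Hx; rewrite size_seg ?(ltnW Hr12) //.
apply: leq_trans; rewrite -(addKn a (size u)); apply: leq_sub; [exact: Hr2a | exact: Hr1b].
Qed.

Definition Bnd (s : seq (seq A)) b := forall k' u, k' < d -> F u ->
  kcover (fun w => w \in s) k' u -> size u <= b.

Definition segP k M := forall W, F W -> forall p q (O : seq nat), p <= q -> q <= size W ->
  size O <= k -> (forall r, p < r < q -> orig W r \in O) -> q - p <= M.

Lemma bnd_X M : Bnd (filter X (allw A M)) n.
Proof.
move=> k' u Hk Fu Hc; apply: (frame (Y := fun w => w \in filter X (allw A M))) Hk Fu Hc.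
by move=> w; rewrite mem_filter => /andP [].
Qed.

Lemma base_seg : segP 0 1.
Proof.
move=> W FW p q O Hpq HqW HO Hin; rewrite leqNgt; apply/negP => H.
move: HO; rewrite leqn0 size_eq0 => /eqP EO.
have H2 : p + 1 < q by rewrite -ltn_subRL.
have : orig W p.+1 \in O by apply: Hin; rewrite ltnSn /= -addn1 H2.
by rewrite EO.
Qed.

Lemma seg_seg (W : seq A) p q r r' : p <= q -> q <= size W -> r <= r' -> r' <= q - p ->
  seg (seg W p q) r r' = seg W (p + r) (p + r').
Proof.
move=> H1 H2 H3 H4.
have H4' : r' <= size (seg W p q) by rewrite size_seg.
have E := @seg_mid (take p W) (seg W p q) (drop q W) r r' H3 H4'.
have EW : take p W ++ seg W p q ++ drop q W = W by rewrite catA -take_seg // cat_take_drop.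
by move: E; rewrite EW size_takel ?(leq_trans H1) // => ->.
Qed.

Lemma step_seg k M B : k.+1 < d -> segP k M -> Bnd (filter X (allw A M)) B -> segP k.+1 B.
Proof.
move=> kd IH HB W FW p q O Hpq HqW HO Hin.
set O' := undup O; set u := seg W p q.
have szu : size u = q - p by rewrite size_seg.
have HpW := leq_trans Hpq HqW.
have szO' : size O' < d by apply: leq_ltn_trans kd; apply: leq_trans HO; exact: size_undup.
have Fu : F u.
  case: recF => _ Hfac _; apply: (Hfac (take p W) _ (drop q W)).
  by rewrite catA -take_seg // cat_take_drop.
rewrite -szu; apply: (HB (size O')) => //.
exists (fun r => index (orig W (p + r)) O'); split.
  move=> r /andP [H1 H2]; rewrite index_mem mem_undup; apply: Hin.
  by rewrite -{1}(addn0 p) ltn_add2l H1 /= -ltn_subRL -szu.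
move=> r r' Hrr Hr'u Eg Hg Hcons.
have Hr'q : p + r' <= q by rewrite -leq_subRL // -szu.
have Hr'W := leq_trans Hr'q HqW.
have Ho : orig W (p + r) \in O' by rewrite -index_mem.
have Ho' : orig W (p + r') \in O' by rewrite -index_mem -Eg.
have Eo : orig W (p + r) = orig W (p + r').
  by rewrite -(nth_index 0 Ho) -(nth_index 0 Ho') Eg.
have Hc2 : forall s, p + r < s < p + r' -> orig W s != orig W (p + r).
  move=> s /andP [Hs1 Hs2].
  have Hps : p <= s by apply: leq_trans (leq_addr r p) (ltnW Hs1).
  have Es : s = p + (s - p) by rewrite subnKC.
  have H1' : r < s - p by rewrite -(ltn_add2l p) -Es.
  have H2' : s - p < r' by rewrite -(ltn_add2l p) -Es.
  move: (Hcons (s - p)); rewrite H1' H2' => /(_ isT) H.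
  by rewrite Es; apply: contra H => /eqP ->.
have HX : X (seg W (p + r) (p + r')).
  by apply: orig_consec => //; rewrite ltn_add2l.
have Hsz : r' - r <= M.
  rewrite -(subnDl p); apply: (IH W FW _ _ (rem (orig W (p + r)) O')).
  - by rewrite leq_add2l ltnW.
  - exact: Hr'W.
  - by rewrite size_rem // -subn1 leq_subLR add1n (leq_trans (size_undup O) HO).
  - move=> t /andP [Ht1 Ht2]; rewrite mem_rem_uniq ?undup_uniq //= inE Hc2 ?Ht1 ?Ht2 //=.
    rewrite mem_undup; apply: Hin; rewrite (leq_ltn_trans (leq_addr r p) Ht1) /=.
    exact: leq_trans Ht2 Hr'q.
rewrite seg_seg // ?(ltnW Hrr) -?szu // mem_filter HX /=; apply: allw_mem.
by rewrite size_seg ?leq_add2l ?(ltnW Hrr) // subnDl.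
Qed.

Lemma final_len M : 0 < d -> (forall x, X x -> F x) -> segP d.-1 M ->
  forall x, X x -> size x <= M.
Proof.
move=> d0 XF HM x Xx.
set OW := filter (pre x) (iota 0 (size x).+1).
have szOW : size OW <= d by rewrite size_filter -delta_pre; apply/degle/XF.
have P0 : 0 \in OW.
  by rewrite mem_filter mem_iota /pre take0 /has_suffix_in /= ?drop0 (negbTE hX0).
rewrite -(subn0 (size x)); apply: (HM x (XF _ Xx) 0 (size x) (rem 0 OW)) => //.
  by rewrite size_rem // -!subn1 leq_sub2r.
move=> r /andP [Hr1 Hr2].
have HrW := ltnW Hr2.
have Hin : orig x r \in OW.
  by rewrite mem_filter orig_pre // mem_iota add0n ltnS (leq_trans (orig_le HrW)).
rewrite mem_rem_uniq ?filter_uniq ?iota_uniq //= inE Hin andbT.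
apply/eqP => E; case/and3P: (orig_spec HrW); rewrite E => _ _ /in_starP.
rewrite /seg drop0 => Hs.
have tne : take r x <> [::].
  by move/(congr1 size); rewrite size_takel //; apply/eqP; rewrite -lt0n.
have [y [w [Ey Hy _]]] := Star_inv Hs tne.
have Eyx : y = x.
  apply: hpre => //; apply/prefixP; exists (w ++ drop r x).
  by rewrite catA -Ey cat_take_drop.
have : size y <= r by rewrite -(size_takel HrW) Ey size_cat leq_addr.
by rewrite Eyx leqNgt Hr2.
Qed.

End Frame.

End Basic.

Lemma max_size (A : finType) (s : seq (seq A)) x : x \in s -> size x <= foldr maxn 0 (map size s).
Proof.
elim: s => [//|a s IH]; rewrite inE => /orP [/eqP ->|/IH H] /=; first exact: leq_maxl.
exact: leq_trans H (leq_maxr _ _).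
Qed.

Lemma Bnd_mono (A : finType) (F : pred (seq A)) d s b b' : b <= b' -> Bnd F d s b -> Bnd F d s b'.
Proof. by move=> H Hb k u Hk Fu Hc; exact: leq_trans (Hb k u Hk Fu Hc) H. Qed.

Theorem mainTheorem9 (A : finType) (F : pred (seq A)) (d : nat) :
  recurrent F -> 1 <= d ->
  exists L : seq (seq (seq A)),
    forall X : pred (seq A),
      finite_words X -> F_maximal_bifix F X -> has_F_degree F X d ->
      exists2 s, s \in L & X =i s.
Proof.
move=> recF d1.
have key : forall k, k < d -> exists M, forall X : pred (seq A), bifix_code X ->
    (forall w, F w -> delta X w <= d) -> (exists z, F z /\ delta X z = d) ->
    (exists n, forall x, X x -> size x <= n) -> segP X F k M.
  elim=> [|k IH] Hk.
    by exists 1 => X _ _ _ _; exact: base_seg.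
  have [M HM] := IH (ltnW Hk).
  have [B HB] := @bound_list _ (Bnd F d) (pw (allw A M)) (@Bnd_mono A F d).
  exists B => X [h0 hp hs] hdeg [z [Fz dz]] [n Xn].
  apply: (step_seg h0 hp hs recF Hk (HM X (And3 h0 hp hs) hdeg (ex_intro _ z (conj Fz dz)) (ex_intro _ n Xn))).
  apply: HB; first exact: filter_pw.
  by exists n; exact: (bnd_X h0 hp hs recF hdeg Fz dz Xn).
have Hd1 : d.-1 < d by rewrite prednK.
have [M HM] := key d.-1 Hd1.
exists (pw (allw A M)) => X [s Hs] [[h0 hp hs] hsub _] [[z Fz dz] hdeg].
have Xn : forall x, X x -> size x <= foldr maxn 0 (map size s).
  by move=> x Xx; apply: max_size; rewrite -Hs.
have HMX := HM X (And3 h0 hp hs) hdeg (ex_intro _ z (conj Fz dz)) (ex_intro _ _ Xn).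
have Hlen := final_len h0 hp hdeg d1 hsub HMX.
exists (filter X (allw A M)); first exact: filter_pw.
move=> w; rewrite mem_filter; case: (boolP (X w)) => Xw /=.
  by rewrite (allw_mem (Hlen w Xw)).
by rewrite -topredE /= (negbTE Xw).
Qed.
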